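(* The sequence $(c_n)_{n\ge1}$ satisfies $c_1=0$ and, for every $n\ge2$, $$c_n=c_{\lceil n/2\rceil}+c_{\lfloor n/2\rfloor}+\lceil n/2\rceil-\lfloor n/2\rfloor;$$ equivalently, $c_{2n}=2c_n$ and $c_{2n+1}=c_{n+1}+c_n+1$ for every $n\ge1$.
   Context: Bifurcating trees: rooted trees in which every internal node has exactly two children; $\mathcal{T}_n$ is the set of isomorphism classes of bifurcating trees with $n$ leaves. For a node $w$, $\kappa_T(w)$ is its number of descendant leaves. The Colless index is $\mathcal{C}(T)=\sum_{v}|\kappa_T(v_1)-\kappa_T(v_2)|$, summed over internal nodes $v$ with children $v_1,v_2$; $c_n=\min\{\mathcal{C}(T):T\in\mathcal{T}_n\}$. *)

(* Defs.v *)
From mathcomp Require Import all_boot.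
Set Implicit Arguments. Unset Strict Implicit. Unset Printing Implicit Defensive.

(* Rooted bifurcating trees: every internal node has exactly two children.
   (Plane representatives; isomorphism classes are obtained by forgetting the
   order of children, which changes neither the number of leaves nor the
   Colless index.) *)
Inductive btree : Type :=
  | Leaf : btree
  | Node : btree -> btree -> btree.

Fixpoint leaves (t : btree) : nat :=
  match t with
  | Leaf => 1
  | Node l r => leaves l + leaves r
  end.

Definition absdiff (a b : nat) : nat := (a - b) + (b - a).

Fixpoint colless (t : btree) : nat :=
  match t with
  | Leaf => 0
  | Node l r => absdiff (leaves l) (leaves r) + colless l + colless r
  end.

(* m is the minimum Colless index over bifurcating trees with n leaves,
   i.e. m = c_n. *)
Definition is_min_colless (n m : nat) : Prop :=
  (exists t, leaves t = n /\ colless t = m) /\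
  (forall t, leaves t = n -> m <= colless t).

(* Main.v *)
Require Import Defs.
From mathcomp Require Import all_boot.
From mathcomp Require Import zify.

Fixpoint F (k n : nat) : nat :=
  match k with
  | 0 => 0
  | k'.+1 => if n <= 1 then 0 else F k' (uphalf n) + F k' n./2 + odd n
  end.
Definition f n := F n n.

Lemma hsplit n : n = odd n + n./2 + n./2 /\ odd n <= 1 /\ uphalf n = odd n + n./2.
Proof.
have := odd_double_half n; rewrite -addnn uphalf_half; split; [lia|split=>//].
by case: (odd n).
Qed.

Lemma F_stable k k' n : n <= k -> n <= k' -> F k n = F k' n.
Proof.
elim: k k' n => [|k IH] [|k'] n /=; try (by move=> h; move: h; rewrite leqn0 => /eqP ->).
- by move=> _ h; move: h; rewrite leqn0 => /eqP ->.
- move=> h1 h2; case: ifP => // hn.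
  have [e [o u]] := hsplit n.
  rewrite (IH k' (uphalf n)) ?(IH k' n./2) //; lia.
Qed.

Lemma f_rec n : 2 <= n -> f n = f (uphalf n) + f n./2 + odd n.
Proof.
move=> hn; rewrite /f; case: n hn => [|k] // hn /=.
have -> : (k.+1 <= 1) = false by case: k hn.
have [e [o u]] := hsplit k.+1.
rewrite (@F_stable k (uphalf k.+1) (uphalf k.+1)) ?(@F_stable k (k.+1./2) (k.+1./2)) //; lia.
Qed.

Lemma f1 : f 1 = 0. Proof. by []. Qed.

Lemma f_even m : 1 <= m -> f (m + m) = f m + f m.
Proof.
move=> hm; rewrite f_rec; last lia.
by rewrite addnn uphalf_double half_double -addnn oddD addbb addn0.
Qed.

Lemma f_odd m : 1 <= m -> f (m + m).+1 = f m.+1 + f m + 1.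
Proof.
move=> hm; rewrite f_rec; last lia.
rewrite uphalf_half oddS oddD addbb /= addnn.
by rewrite uphalf_double add1n.
Qed.

Lemma parity n : exists p, n = p + p \/ n = (p + p).+1.
Proof.
have [e [o _]] := hsplit n; exists n./2; move: e o; case: (odd n) => /= e o.
- by right; rewrite {1}e; lia.
- by left; rewrite {1}e; lia.
Qed.

Lemma key s : forall a b, 1 <= a -> 1 <= b -> a + b <= s ->
  f (a + b) <= f a + f b + absdiff a b.
Proof.
elim: s => [|s IH] a b ha hb hs; first lia.
have [p [ea|ea]] := parity a; have [q [eb|eb]] := parity b; subst a b.
- have -> : p + p + (q + q) = (p + q) + (p + q) by lia.
  rewrite !f_even; try lia.
  move: (IH p q); rewrite /absdiff; lia.
- case: q hb hs => [|q] hb hs.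
  + have -> : p + p + (0 + 0).+1 = (p + p).+1 by lia.
    change ((0+0).+1) with 1.
    rewrite f_odd ?f_even; try lia.
    move: (IH p 1); rewrite addn1 f1 /absdiff; lia.
  + have -> : p + p + (q.+1 + q.+1).+1 = ((p + q.+1) + (p + q.+1)).+1 by lia.
    rewrite ?f_odd ?f_even; try lia.
    move: (IH p q.+2) (IH p q.+1); rewrite (addnS p q.+1) /absdiff; lia.
- case: p ha hs => [|p] ha hs.
  + have -> : (0 + 0).+1 + (q + q) = (q + q).+1 by lia.
    change ((0+0).+1) with 1.
    rewrite f_odd ?f_even; try lia.
    move: (IH q 1); rewrite addn1 f1 /absdiff; lia.
  + have -> : (p.+1 + p.+1).+1 + (q + q) = ((q + p.+1) + (q + p.+1)).+1 by lia.
    rewrite ?f_odd ?f_even; try lia.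
    move: (IH q p.+2) (IH q p.+1); rewrite (addnS q p.+1) /absdiff; lia.
- have -> : (p + p).+1 + (q + q).+1 = (p + q).+1 + (p + q).+1 by lia.
  rewrite f_even; last lia.
  case: p ha hs => [|p] ha hs; case: q hb hs => [|q] hb hs.
  + by [].
  + change ((0+0).+1) with 1; rewrite f1 add0n (@f_odd q.+1); last lia.
    move: (IH q.+1 1); rewrite addn1 f1 /absdiff; lia.
  + change ((0+0).+1) with 1; rewrite f1 addn0 (@f_odd p.+1); last lia.
    move: (IH p.+1 1); rewrite addn1 f1 /absdiff; lia.
  + rewrite (@f_odd p.+1) ?(@f_odd q.+1); try lia.
    move: (IH p.+2 q.+1) (IH p.+1 q.+2).
    rewrite (addSn p.+1 q.+1) (addnS p.+1 q.+1) /absdiff; lia.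
Qed.

Lemma leaves_pos t : 1 <= leaves t.
Proof. elim: t => //= l hl r hr; lia. Qed.

Lemma lower t : f (leaves t) <= colless t.
Proof.
elim: t => // l hl r hr /=.
have := @key (leaves l + leaves r) _ _ (leaves_pos l) (leaves_pos r) (leqnn _).
lia.
Qed.

Lemma exists_tree N : forall n, 1 <= n <= N -> exists t, leaves t = n /\ colless t = f n.
Proof.
elim: N => [|N IH] n hn; first lia.
case: (leqP n 1) => h1.
- exists Leaf; have -> : n = 1 by lia. by [].
- have [e [o u]] := hsplit n.
  have [t1 [l1 c1]] := IH (uphalf n) ltac:(lia).
  have [t2 [l2 c2]] := IH (n./2) ltac:(lia).
  exists (Node t1 t2) => /=; rewrite l1 l2 c1 c2 (@f_rec n h1) /absdiff; lia.
Qed.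

Lemma c_eq c (hc : forall n, 1 <= n -> is_min_colless n (c n)) n : 1 <= n -> c n = f n.
Proof.
move=> hn; have [[t [lt ct]] hmin] := hc n hn.
have [t' [lt' ct']] := (@exists_tree n n ltac:(lia)).
have := hmin t' lt'; have := lower t; rewrite lt ct; lia.
Qed.

Theorem corollary3 (c : nat -> nat)
  (hc : forall n, 1 <= n -> is_min_colless n (c n)) :
  c 1 = 0 /\
  (forall n, 2 <= n -> c n = c (uphalf n) + c n./2 + (uphalf n - n./2)) /\
  (forall n, 1 <= n -> c (n.*2) = (c n).*2 /\ c (n.*2.+1) = c n.+1 + c n + 1).
Proof.
have E := @c_eq c hc.
split; first by rewrite E.
split.
- move=> n hn; have [e [o u]] := hsplit n.
  rewrite (E n) ?(E (uphalf n)) ?(E n./2) ?(@f_rec n hn); try lia.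
- move=> n hn; rewrite -!addnn (E (n+n)) ?(E (n+n).+1) ?(E n) ?(E n.+1) //; try lia.
  by rewrite (@f_even n hn) (@f_odd n hn).
Qed.
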